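(* Let $\mathcal{G}=(\mathcal{V},\mathcal{E})$ be an undirected graph with $n$ nodes and $E$ edges, with incidence matrix $A\in\mathbb{R}^{n\times E}$. For each node $i$ let $f_i:\mathbb{R}\to\mathbb{R}$ be $M_i$-smooth and $\mu_i$-strongly convex, and let $F(\lambda)=\sum_{i=1}^n f_i^*(u_i^T A\lambda)$ for $\lambda\in\mathbb{R}^E$. Then for every $\lambda\in\mathbb{R}^E$, $$\|\nabla F(\lambda)\|_2=\|\nabla F(\lambda)\|_{A^+A}=\|\nabla F(\lambda)\|_{A^+A}^*.$$
   Context: The incidence matrix $A$ has, in each column $\ell$ (edge $\ell\equiv(i,j)$), one entry $+1$ and one entry $-1$ in the rows of the endpoints $i,j$ (signs arbitrary), and zeros elsewhere. $u_i$ is the $i$-th standard basis vector of $\mathbb{R}^n$; $f_i^*(y)=\sup_x(yx-f_i(x))$ is the Fenchel conjugate. $A^+$ denotes the Moore–Penrose pseudo-inverse of $A$. The semi-norm $\|x\|_{A^+A}$ is $(x^TA^+Ax)^{1/2}$, and its dual is $\|z\|_{A^+A}^*=\sup_{x\in\mathbb{R}^E}\{z^Tx : \|x\|_{A^+A}\le 1\}$. *)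

(* Defs.v *)
From HB Require Import structures.
From mathcomp Require Import all_boot all_order all_algebra.
From mathcomp Require Import all_classical all_reals all_analysis.
Set Implicit Arguments. Unset Strict Implicit. Unset Printing Implicit Defensive.
Import Order.TTheory GRing.Theory Num.Theory.
Import numFieldNormedType.Exports.
Local Open Scope classical_set_scope.
Local Open Scope ring_scope.

Section Defs.
Variable R : realType.

Definition smooth_fun (M : R) (f : R -> R) : Prop :=
  (forall x : R, derivable f x 1) /\
  (forall x y : R, `|derive1 f x - derive1 f y| <= M * `|x - y|).

Definition strongly_convex (mu : R) (f : R -> R) : Prop :=
  0 < mu /\
  (forall x y t : R, 0 <= t -> t <= 1 ->
     f (t * x + (1 - t) * y) <=
       t * f x + (1 - t) * f y - mu / 2 * t * (1 - t) * (x - y) ^+ 2).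

Definition fconj (f : R -> R) (y : R) : R :=
  sup [set y * x - f x | x in [set: R]].

(* A is the incidence matrix of the graph whose edge l joins src l and tgt l
   (src l <> tgt l): column l has +1 at row src l, -1 at row tgt l, 0 elsewhere. *)
Definition is_incidence (n E : nat) (src tgt : 'I_E -> 'I_n)
    (A : 'M[R]_(n, E)) : Prop :=
  (forall l, src l != tgt l) /\
  (forall i l, A i l = (i == src l)%:R - (i == tgt l)%:R).

Definition is_pinv (m k : nat) (A : 'M[R]_(m, k)) (X : 'M[R]_(k, m)) : Prop :=
  [/\ A *m X *m A = A, X *m A *m X = X,
      (A *m X)^T = A *m X & (X *m A)^T = X *m A].

Definition gradient (E : nat) (F : 'cV[R]_E -> R) (x : 'cV[R]_E) : 'cV[R]_E :=
  \col_j ('d F x (delta_mx j 0)).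

Definition norm2 (E : nat) (z : 'cV[R]_E) : R := Num.sqrt (\sum_j z j 0 ^+ 2).

Definition seminormP (E : nat) (P : 'M[R]_E) (x : 'cV[R]_E) : R :=
  Num.sqrt ((x^T *m P *m x) 0 0).

Definition dualnormP (E : nat) (P : 'M[R]_E) (z : 'cV[R]_E) : R :=
  sup [set (z^T *m x) 0 0 | x in [set x | seminormP P x <= 1]].

End Defs.

(* Main.v *)
Require Import Defs.
From HB Require Import structures.
From mathcomp Require Import all_boot all_order all_algebra.
From mathcomp Require Import all_classical all_reals all_analysis.
From mathcomp Require Import ring lra.
Set Implicit Arguments. Unset Strict Implicit. Unset Printing Implicit Defensive.
Import Order.TTheory GRing.Theory Num.Theory.
Import numFieldNormedType.Exports.
Local Open Scope classical_set_scope.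
Local Open Scope ring_scope.
Lemma first_order (R : realType) (M mu : R) (f : R -> R) :
  smooth_fun M f -> strongly_convex mu f ->
  forall x z, f x + derive1 f x * (z - x) + mu / 2 * (z - x) ^+ 2 <= f z.
Proof.
move=> [fd _] [mu0 sc] x z.
set L := derive1 f x; set d := z - x.
have [d0|d0] := eqVneq d 0.
  rewrite d0.
  by rewrite mulr0 expr0n /= mulr0 !addr0; move/eqP: d0; rewrite subr_eq0 => /eqP ->.
have hq : (fun h : R => h^-1 *: ((f \o shift x) (h *: 1) - f x)) @ 0^' --> L.
  by rewrite /L derive1E; apply: (fd x).
set C := f z - f x - mu / 2 * d ^+ 2.
suff : L * d <= C by rewrite /C; lra.
apply/ler_addgt0Pr => eps eps0.
have ad0 : 0 < `|d| by rewrite normr_gt0.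
have e10 : 0 < eps / (2 * `|d|) by apply: divr_gt0 => //; lra.
move/cvgrPdist_lt: hq => /(_ _ e10).
move=> /nbhs_ballP [r /= r0 Hr].
pose t := Num.min 1 (Num.min (r / (2 * `|d|)) (eps / (mu * d ^+ 2))).
have d2 : 0 < d ^+ 2 by rewrite exprn_even_gt0.
have t0 : 0 < t.
  rewrite /t !lt_min ltr01 /=; apply/andP; split; apply: divr_gt0 => //.
    lra.
  exact: mulr_gt0.
have t1 : t <= 1 by rewrite /t ge_min lexx.
have tr : t * `|d| < r.
  have : t <= r / (2 * `|d|) by rewrite /t !ge_min lexx orbT.
  rewrite ler_pdivlMr; last lra.
  move=> h; nra.
have te : t * (mu * d ^+ 2) <= eps.
  have : t <= eps / (mu * d ^+ 2) by rewrite /t !ge_min lexx !orbT.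
  by rewrite ler_pdivlMr //; apply: mulr_gt0.
have h0 : t * d != 0 by rewrite mulf_neq0 // gt_eqF.
have := Hr (t * d).
rewrite [(t * d)%:A]mulr1 (_ : forall a b : R, a *: b = a * b) //.
have hb : ball (0:R) r (t * d).
  by rewrite -ball_normE /= sub0r normrN normrM (gtr0_norm t0).
move=> /(_ hb h0).
have := sc z x t (ltW t0) t1.
have -> : t * z + (1 - t) * x = t * d + x by rewrite /d; ring.
rewrite -/d.
set q := f (t * d + x).
move=> hsc hL.
have hL2 : L * (t * d) <= q - f x + eps / (2 * `|d|) * (t * `|d|).
  have := ler_norm (L - (t * d)^-1 * (q - f x)).
  move/le_lt_trans/(_ hL) => hL'.
  have : L * (t * d) - (q - f x) = (L - (t * d)^-1 * (q - f x)) * (t * d).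
    by rewrite mulrBl [_^-1 * _ * _]mulrAC mulVf // mul1r.
  move=> e.
  have : L * (t * d) - (q - f x) <= `|L - (t * d)^-1 * (q - f x)| * (t * `|d|).
    rewrite e; apply: le_trans (ler_norm _) _.
    by rewrite normrM (normrM t) (gtr0_norm t0).
  have : `|L - (t * d)^-1 * (q - f x)| * (t * `|d|) <= eps / (2 * `|d|) * (t * `|d|).
    apply: ler_wpM2r; [exact: mulr_ge0 (ltW t0) (ltW ad0)| exact: ltW].
  lra.
have ee : eps / (2 * `|d|) * (t * `|d|) = t * (eps / 2).
  have gen : forall (e a tt : R), a != 0 -> e / (2 * a) * (tt * a) = tt * (e / 2).
    by move=> e a tt a0; field; rewrite a0.
  by apply: gen; rewrite gt_eqF.
rewrite ee in hL2.
have : t * (L * d) <= t * (C + eps).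
  rewrite /C; nra.
by rewrite ler_pM2l.
Qed.
Lemma mono_deriv (R : realType) (M mu : R) (f : R -> R) :
  smooth_fun M f -> strongly_convex mu f ->
  forall x z, mu * (z - x) ^+ 2 <= (derive1 f z - derive1 f x) * (z - x).
Proof.
move=> hs hc x z.
have h1 := first_order hs hc x z.
have h2 := first_order hs hc z x.
have e : (x - z) ^+ 2 = (z - x) ^+ 2 by rewrite -sqrrN opprB.
rewrite e in h2.
have e2 : derive1 f z * (x - z) = - (derive1 f z * (z - x)) by rewrite -mulrN opprB.
rewrite e2 in h2.
set a := derive1 f z in h2 *; set b := derive1 f x in h1 *.
rewrite mulrBl. lra.
Qed.

Lemma deriv_cont (R : realType) (M : R) (f : R -> R) :
  smooth_fun M f -> continuous (derive1 f).
Proof.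
move=> [_ hl] x.
apply/cvgrPdist_lt => e e0; apply/nbhs_ballP.
have m1 : 0 < `|M| + 1 by rewrite ltr_wpDl.
exists (e / (`|M| + 1)); first exact: divr_gt0.
move=> z; rewrite /ball /= => hz.
have hz' : (`|M| + 1) * `|x - z| < e.
  by rewrite mulrC -ltr_pdivlMr.
have := hl x z.
have := ler_norm M.
have := normr_ge0 (x - z).
move: (derive1 f x) (derive1 f z) => a b.
nra.
Qed.

Lemma deriv_surj (R : realType) (M mu : R) (f : R -> R) :
  smooth_fun M f -> strongly_convex mu f ->
  forall y, exists x, derive1 f x = y.
Proof.
move=> hs hc y.
have mu0 := hc.1.
set c := derive1 f 0.
pose b := `|y - c| / mu + 1.
have b0 : 0 < b by rewrite /b ltr_wpDl // divr_ge0 // ltW.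
have hb : mu * b = `|y - c| + mu.
  by rewrite /b mulrDr mulr1 mulrCA divff ?mulr1 // gt_eqF.
have hm1 := mono_deriv hs hc 0 b.
have hm2 := mono_deriv hs hc 0 (- b).
rewrite !subr0 sqrrN in hm1 hm2.
have hyc := ler_norm (y - c).
have hyc' := ler_norm (c - y).
rewrite distrC in hyc'.
have fb : y <= derive1 f b.
  rewrite -/c in hm1; nra.
have fa : derive1 f (- b) <= y.
  rewrite -/c in hm2; nra.
have := @IVT R (derive1 f) (- b) b y.
case.
- by rewrite lerNl; apply/ltW/(lt_le_trans _ (ltW b0)); rewrite oppr_lt0.
- exact/continuous_subspaceT/(deriv_cont hs).
- rewrite ge_min le_max fa fb /= orbT; done.
by move=> x _ <-; exists x.
Qed.

Lemma sup_max_eq (R : realType) (S : set R) (a : R) :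
  S a -> (forall b, S b -> b <= a) -> sup S = a.
Proof.
move=> Sa ub; apply/eqP; rewrite eq_le; apply/andP; split.
  by apply: ge_sup; [exists a | move=> b /ub].
by apply: ub_le_sup => //; exists a => b /ub.
Qed.

Lemma conj_val (R : realType) (M mu : R) (f : R -> R) :
  smooth_fun M f -> strongly_convex mu f ->
  forall x y, derive1 f x = y ->
  (forall z, y * z - f z <= y * x - f x) /\ fconj f y = y * x - f x.
Proof.
move=> hs hc x y hxy.
have mu0 := hc.1.
have ub : forall z, y * z - f z <= y * x - f x.
  move=> z; have := first_order hs hc x z; rewrite hxy.
  have := sqr_ge0 (z - x); nra.
split => //; apply: sup_max_eq; first by exists x.
by move=> b [z _ <-]; apply: ub.
Qed.

Lemma conj_quad (R : realType) (M mu : R) (f : R -> R) :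
  smooth_fun M f -> strongly_convex mu f ->
  forall y, exists p, forall h,
    `|fconj f (y + h) - fconj f y - h * p| <= h ^+ 2 / mu.
Proof.
move=> hs hc y.
have mu0 := hc.1.
have [x hx] := deriv_surj hs hc y.
exists x => h.
have [x' hx'] := deriv_surj hs hc (y + h).
have [u1 e1] := conj_val hs hc hx.
have [u2 e2] := conj_val hs hc hx'.
rewrite e1 e2.
have l1 := u2 x.
have l2 := u1 x'.
have m := mono_deriv hs hc x x'.
rewrite hx hx' in m.
have hh : (y + h - y) = h by rewrite addrC addKr.
rewrite hh in m.
have key : h * (x' - x) <= h ^+ 2 / mu.
  rewrite ler_pdivlMr //.
  have := sqr_ge0 (h - mu * (x' - x)); nra.
rewrite ger0_norm; first by nra.
nra.
Qed.

Lemma conj_derivable (R : realType) (M mu : R) (f : R -> R) :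
  smooth_fun M f -> strongly_convex mu f ->
  forall y, derivable (fconj f) y 1.
Proof.
move=> hs hc y.
have mu0 := hc.1.
have [p hp] := conj_quad hs hc y.
apply/cvg_ex; exists p.
apply/cvgrPdist_lt => e e0.
near=> h.
have hne : h != 0 by near: h; exact: nbhs_dnbhs_neq.
have hlt : `|h| < e * mu by near: h; apply: dnbhs0_lt; exact: mulr_gt0.
rewrite /= [h%:A]mulr1 (_ : forall a b : R, a *: b = a * b) // (addrC h y).
have := hp h.
have -> : p - h^-1 * (fconj f (y + h) - fconj f y)
   = - h^-1 * (fconj f (y + h) - fconj f y - h * p).
  have gen : forall a b c : R, a != 0 -> c - a^-1 * b = - a^-1 * (b - a * c).
    by move=> a b c a0; field.
  exact: gen.
rewrite normrM normrN normfV => hb.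
rewrite ltr_pdivrMl ?normr_gt0 //.
apply: (le_lt_trans hb).
rewrite -(ger0_norm (sqr_ge0 h)) normrX ltr_pdivrMr //.
have ha : 0 < `|h| by rewrite normr_gt0.
rewrite expr2; nra.
Unshelve. all: by end_near.
Qed.
Lemma diff_sum_val (R : realType) (V W : normedModType R) n (G : 'I_n -> V -> W) x :
  (forall i, differentiable (G i) x) ->
  forall v, 'd (\sum_(i < n) G i) x v = \sum_(i < n) 'd (G i) x v.
Proof.
elim: n G => [|n IH] G dG v.
  by rewrite !big_ord0 diff_cst.
rewrite !big_ord_recr /= diffD //=; last exact: differentiable_sum.
by rewrite IH.
Qed.

Lemma lin_ell (R : realType) n E (A : 'M[R]_(n, E)) (i : 'I_n) (lam : 'cV[R]_E) :
  differentiable (fun v : 'cV[R]_E => (A *m v) i 0) lam /\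
  forall v, 'd (fun v : 'cV[R]_E => (A *m v) i 0) lam v = (A *m v) i 0.
Proof.
pose l := fun v : 'cV[R]_E => (A *m v) i 0.
have lin : linear l.
  by move=> a u v; rewrite /l mulmxDr -scalemxAr !mxE.
pose lM := GRing.isLinear.Build _ _ _ _ _ lin.
pose L : {linear 'cV[R]_E -> R} := HB.pack l lM.
have eL : (fun v : 'cV[R]_E => (A *m v) i 0) = L by [].
have dl : forall y, differentiable (fun v : 'cV[R]_E => (A *m v) i 0) y.
  move=> y.
  have -> : (fun v : 'cV[R]_E => (A *m v) i 0) =
      \sum_(k < E) (fun v : 'cV[R]_E => A i k *: v k 0).
    apply/funext => v; rewrite fct_sumE mxE; apply: eq_bigr => k _ //.
  apply: differentiable_sum => k.
  apply: differentiableZ; exact: differentiable_coord.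
split; first exact: dl.
rewrite eL => v; rewrite diff_lin //.
move=> y; apply: differentiable_continuous; exact: dl.
Qed.

Lemma grad_form (R : realType) n E (A : 'M[R]_(n, E)) (g : 'I_n -> R -> R)
  (lam : 'cV[R]_E) :
  (forall i y, derivable (g i) y 1) ->
  let F := fun lam : 'cV[R]_E => \sum_(i < n) g i ((A *m lam) i 0) in
  differentiable F lam /\ exists c : 'cV[R]_n, gradient F lam = A^T *m c.
Proof.
move=> dg F.
pose G i := fun v : 'cV[R]_E => g i ((A *m v) i 0).
have eF : F = \sum_(i < n) G i.
  by apply/funext => v; rewrite fct_sumE.
have dG : forall i, differentiable (G i) lam.
  move=> i; rewrite /G.
  have -> : (fun v : 'cV[R]_E => g i ((A *m v) i 0)) =
      g i \o (fun v : 'cV[R]_E => (A *m v) i 0) by [].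
  apply: differentiable_comp; first exact: (lin_ell A i lam).1.
  exact/derivable1_diffP.
have dF : differentiable F lam by rewrite eF; exact: differentiable_sum.
split => //.
exists (\col_i 'd (g i) ((A *m lam) i 0) 1).
apply/matrixP => j k; rewrite (ord1 k) /gradient !mxE.
rewrite eF diff_sum_val //.
apply: eq_bigr => i _; rewrite !mxE.
rewrite /G.
have -> : (fun v : 'cV[R]_E => g i ((A *m v) i 0)) =
    g i \o (fun v : 'cV[R]_E => (A *m v) i 0) by [].
rewrite diff_comp /=; last first.
  exact/derivable1_diffP.
  exact: (lin_ell A i lam).1.
rewrite (lin_ell A i lam).2.
have lz h y : 'd (g i) y h = h * 'd (g i) y 1.
  have := linearZZ ('d (g i) y) h (1:R).
  by rewrite [h%:A]mulr1 => ->.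
rewrite lz -colE [col _ _ _ _]mxE [(A *m lam) i 0]mxE.
by rewrite mulrC.
Qed.
Lemma cs_ineq (R : realType) E (g y : 'cV[R]_E) :
  \sum_j y j 0 ^+ 2 <= 1 ->
  \sum_j g j 0 * y j 0 <= Num.sqrt (\sum_j g j 0 ^+ 2).
Proof.
move=> hy.
set sg := \sum_j g j 0 ^+ 2; set gy := \sum_j g j 0 * y j 0.
set yy := \sum_j y j 0 ^+ 2.
have sg0 : 0 <= sg by apply: sumr_ge0 => j _; exact: sqr_ge0.
have yy0 : 0 <= yy by apply: sumr_ge0 => j _; exact: sqr_ge0.
set ng := Num.sqrt sg.
have ng0 : 0 <= ng := sqrtr_ge0 _.
have ng2 : ng ^+ 2 = sg by rewrite sqr_sqrtr.
have id : \sum_j (g j 0 - ng * y j 0) ^+ 2 = sg - 2 * ng * gy + ng ^+ 2 * yy.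
  rewrite /sg /gy /yy mulr_sumr mulr_sumr -sumrB -big_split /=.
  by apply: eq_bigr => j _; ring.
have pos : 0 <= \sum_j (g j 0 - ng * y j 0) ^+ 2.
  by apply: sumr_ge0 => j _; exact: sqr_ge0.
have [ngz|ngp] := eqVneq ng 0.
  have : sg = 0 by rewrite -ng2 ngz expr0n.
  move/eqP; rewrite psumr_eq0; last by move=> j _; exact: sqr_ge0.
  move=> /allP hz.
  rewrite ngz /gy big1 // => j _.
  have /(_ (mem_index_enum j)) := hz j.
  by rewrite sqrf_eq0 /= => /eqP ->; rewrite mul0r.
have ngp' : 0 < ng by rewrite lt_def ngp ng0.
rewrite id in pos.
have : ng * gy <= ng * ng.
  rewrite -ng2 in pos.
  have h : ng ^+ 2 * yy <= ng ^+ 2 by rewrite ler_piMr // sqr_ge0.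
  rewrite expr2 in pos h; lra.
by rewrite ler_pM2l.
Qed.

Lemma dotE (R : realType) E (a b : 'cV[R]_E) :
  (a^T *m b) 0 0 = \sum_j a j 0 * b j 0.
Proof. by rewrite mxE; apply: eq_bigr => j _; rewrite mxE. Qed.

Lemma lin_part (R : realType) n E (A : 'M[R]_(n, E)) (Ap : 'M[R]_(E, n))
  (c : 'cV[R]_n) : is_pinv A Ap ->
  let g := A^T *m c in
  norm2 g = seminormP (Ap *m A) g /\
  seminormP (Ap *m A) g = dualnormP (Ap *m A) g.
Proof.
move=> [h1 h2 h3 h4] g.
set P := Ap *m A.
have h4' : P^T = P by exact: h4.
have AP : A *m P = A by rewrite /P mulmxA h1.
have PAT : P *m A^T = A^T by rewrite -h4' -trmx_mul AP.
have Pg : P *m g = g by rewrite /g mulmxA PAT.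
have PP : P *m P = P by rewrite /P mulmxA h2.
have gTP : g^T *m P = g^T by rewrite -h4' -trmx_mul Pg.
have quad : forall x : 'cV[R]_E, x^T *m P *m x = (P *m x)^T *m (P *m x).
  by move=> x; rewrite trmx_mul h4' mulmxA -(mulmxA _ P P) PP.
have sq : forall x : 'cV[R]_E, (x^T *m x) 0 0 = \sum_j x j 0 ^+ 2.
  by move=> x; rewrite dotE; apply: eq_bigr => j _; rewrite expr2.
have e1 : norm2 g = seminormP P g.
  by rewrite /norm2 /seminormP -mulmxA Pg sq.
split => //.
rewrite -e1 /dualnormP.
set ng := norm2 g.
have sg0 : 0 <= \sum_j g j 0 ^+ 2 by apply: sumr_ge0 => j _; exact: sqr_ge0.
have ng2 : ng ^+ 2 = \sum_j g j 0 ^+ 2 by rewrite /ng /norm2 sqr_sqrtr.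
symmetry; apply: sup_max_eq.
- have [ngz|ngp] := eqVneq ng 0.
    exists 0; last by rewrite mulmx0 mxE ngz.
    by rewrite /= /seminormP mulmx0 mxE sqrtr0.
  exists (ng^-1 *: g).
    rewrite /= /seminormP quad -scalemxAr Pg sq.
    under eq_bigr do rewrite mxE exprMn.
    by rewrite -mulr_sumr -ng2 -exprMn mulVf // expr1n sqrtr1.
  rewrite -scalemxAr mxE sq -ng2 expr2 mulrA mulVf ?mul1r //.
- move=> b [x /= hx <-].
  rewrite -gTP -mulmxA dotE.
  apply: cs_ineq.
  rewrite -sq -quad.
  move: hx; rewrite /seminormP.
  have : 0 <= (x^T *m P *m x) 0 0 by rewrite quad sq; apply: sumr_ge0 => j _; exact: sqr_ge0.
  move: ((x^T *m P *m x) 0 0) => s s0.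
  by move=> h; rewrite -(@ler_sqrt _ s 1 ler01) sqrtr1.
Qed.

Theorem lemma3 (R : realType) (n E : nat) (src tgt : 'I_E -> 'I_n)
    (A : 'M[R]_(n, E)) (Ap : 'M[R]_(E, n))
    (f : 'I_n -> R -> R) (M mu : 'I_n -> R) :
  is_incidence src tgt A ->
  is_pinv A Ap ->
  (forall i, smooth_fun (M i) (f i)) ->
  (forall i, strongly_convex (mu i) (f i)) ->
  let F := fun lam : 'cV[R]_E => \sum_(i < n) fconj (f i) ((A *m lam) i 0) in
  forall lam : 'cV[R]_E,
    differentiable F lam /\
    norm2 (gradient F lam) = seminormP (Ap *m A) (gradient F lam) /\
    seminormP (Ap *m A) (gradient F lam) = dualnormP (Ap *m A) (gradient F lam).
Proof.
move=> _ hp hs hc F lam.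
have dg : forall i y, derivable (fconj (f i)) y 1.
  by move=> i; exact: conj_derivable (hs i) (hc i).
have [dF [c gc]] := grad_form A lam dg.
split => //.
rewrite gc.
exact: lin_part.
Qed.
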